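(* Let $f(\mathbf z)$ be a holomorphic function of $n$ variables defined near the origin, let $a,b$ be non-negative integers with $a>b\ge0$ (respectively $0\le a<b$), and let $g(\mathbf w,\bar{\mathbf w})=f(w_1^a\bar w_1^b,\dots,w_n^a\bar w_n^b)$. Then $g$ is holomorphic-like (respectively anti-holomorphic-like) in a neighborhood of the origin, i.e. there is a neighborhood $U$ of the origin such that $C_g(\mathbf w,\bar{\mathbf w})\ge0$ (respectively $\le 0$) for all $\mathbf w\in g^{-1}(0)\cap U$.
   Context: For a mixed function $g(\mathbf w,\bar{\mathbf w})$ write $g_{w_j}=\partial g/\partial w_j$, $g_{\bar w_j}=\partial g/\partial\bar w_j$, and set $C_{j,k}=|w_j\overline{g_{w_k}}-w_k\overline{g_{w_j}}|^2-|w_jg_{\bar w_k}-w_kg_{\bar w_j}|^2$, $C_g(\mathbf w,\bar{\mathbf w})=\sum_{1\le j<k\le n}C_{j,k}$. The paper calls a mixed function with an isolated mixed singularity at the origin holomorphic-like (resp. anti-holomorphic-like) on a neighborhood $U$ of $0$ if $C_g\ge0$ (resp. $\le0$) at every point of $g^{-1}(0)\cap U$. *)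

(* Defs.v *)
From Stdlib Require Import Reals.
From Coquelicot Require Import Coquelicot.
From mathcomp Require Import ssreflect ssrbool eqtype ssrnat fintype bigop.

Open Scope R_scope.

Definition Vec (n : nat) := 'I_n -> C.

Fixpoint cpow (z : C) (k : nat) : C :=
  match k with O => RtoC 1 | S k' => Cmult z (cpow z k') end.

Definition vnorm {n} (h : Vec n) : R := \big[Rmax/0]_(i < n) Cmod (h i).

Definition in_polydisc {n} (r : R) (z : Vec n) : Prop := forall i, Cmod (z i) < r.

Definition vadd {n} (z h : Vec n) : Vec n := fun i => Cplus (z i) (h i).

Definition holomorphic_on {n} (rho : R) (f : Vec n -> C) : Prop :=
  forall z : Vec n, in_polydisc rho z ->
    exists D : Vec n, forall eps, 0 < eps -> exists delta, 0 < delta /\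
      forall h : Vec n, in_polydisc delta h ->
        Cmod (Cminus (Cminus (f (vadd z h)) (f z))
                     (\big[Cplus/RtoC 0]_(i < n) Cmult (D i) (h i)))
          <= eps * vnorm h.

Definition shift {n} (w : Vec n) (j : 'I_n) (c : C) : Vec n :=
  fun i => if i == j then Cplus (w i) c else w i.

Definition pdx {n} (g : Vec n -> C) (w : Vec n) (j : 'I_n) : C :=
  (Derive (fun t => Re (g (shift w j (RtoC t)))) 0,
   Derive (fun t => Im (g (shift w j (RtoC t)))) 0).
Definition pdy {n} (g : Vec n -> C) (w : Vec n) (j : 'I_n) : C :=
  (Derive (fun t => Re (g (shift w j (Cmult Ci (RtoC t))))) 0,
   Derive (fun t => Im (g (shift w j (Cmult Ci (RtoC t))))) 0).

Definition dw {n} (g : Vec n -> C) (w : Vec n) (j : 'I_n) : C :=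
  Cmult (RtoC (/2)) (Cminus (pdx g w j) (Cmult Ci (pdy g w j))).
Definition dwbar {n} (g : Vec n -> C) (w : Vec n) (j : 'I_n) : C :=
  Cmult (RtoC (/2)) (Cplus (pdx g w j) (Cmult Ci (pdy g w j))).

Definition Cjk {n} (g : Vec n -> C) (w : Vec n) (j k : 'I_n) : R :=
  (Cmod (Cminus (Cmult (w j) (Cconj (dw g w k))) (Cmult (w k) (Cconj (dw g w j))))) ^ 2
  - (Cmod (Cminus (Cmult (w j) (dwbar g w k)) (Cmult (w k) (dwbar g w j)))) ^ 2.

Definition Cg {n} (g : Vec n -> C) (w : Vec n) : R :=
  \big[Rplus/0]_(j < n) \big[Rplus/0]_(k < n | (j < k)%N) Cjk g w j k.

Definition gab {n} (a b : nat) (f : Vec n -> C) : Vec n -> C :=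
  fun w => f (fun i => Cmult (cpow (w i) a) (cpow (Cconj (w i)) b)).

(* Main.v *)
From HB Require Import structures.
Require Import Defs.
From Stdlib Require Import Reals Lra Psatz FunctionalExtensionality.
From Coquelicot Require Import Coquelicot.
From mathcomp Require Import ssreflect ssrbool eqtype ssrnat fintype bigop.
Open Scope R_scope.

Definition dlim (G : R -> C) (L : C) : Prop :=
  forall eps, 0 < eps -> exists delta, 0 < delta /\
    forall t, Rabs t < delta -> Cmod (Cminus (Cminus (G t) (G 0)) (Cmult (RtoC t) L)) <= eps * Rabs t.

Lemma Cmod_RtoC_abs t : Cmod (RtoC t) = Rabs t.
Proof. apply Cmod_R. Qed.

Lemma im_le_Cmod c : Rabs (Im c) <= Cmod c.
Proof.
  have := re_le_Cmod (Im c, Re c). rewrite /Cmod /=.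
  have -> : (Re c ^ 2 + Im c ^ 2) = (Im c ^ 2 + Re c ^ 2) by ring. done.
Qed.

Lemma dlim_Derive G L : dlim G L ->
  Derive (fun t => Re (G t)) 0 = Re L /\ Derive (fun t => Im (G t)) 0 = Im L.
Proof.
  move=> HG; split; apply is_derive_unique; apply is_derive_Reals => eps Heps;
  have [d [Hd Hb]] := HG (eps/2) ltac:(lra);
  exists (mkposreal d Hd) => h Hh0 Hh /=; rewrite Rplus_0_l;
  have Hp : 0 < Rabs h by apply Rabs_pos_lt.
  - have := Hb h Hh.
    set z := Cminus _ _ => Hz.
    have Hr : Re z = Re (G h) - Re (G 0) - h * Re L.
      rewrite /z /=. destruct (G h), (G 0), L; simpl; ring.
    have H1 := re_le_Cmod z.
    have -> : (Re (G h) - Re (G 0)) / h - Re L = Re z / h by rewrite Hr; field; exact Hh0.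
    rewrite Rabs_div; last exact Hh0.
    apply Rmult_lt_reg_r with (Rabs h) => //.
    rewrite /Rdiv Rmult_assoc Rinv_l; last by apply Rgt_not_eq.
    nra.
  - have := Hb h Hh.
    set z := Cminus _ _ => Hz.
    have Hr : Im z = Im (G h) - Im (G 0) - h * Im L.
      rewrite /z /=. destruct (G h), (G 0), L; simpl; ring.
    have H1 := im_le_Cmod z.
    have -> : (Im (G h) - Im (G 0)) / h - Im L = Im z / h by rewrite Hr; field; exact Hh0.
    rewrite Rabs_div; last exact Hh0.
    apply Rmult_lt_reg_r with (Rabs h) => //.
    rewrite /Rdiv Rmult_assoc Rinv_l; last by apply Rgt_not_eq.
    nra.
Qed.

Lemma dlim_bound P P' : dlim P P' -> exists d, 0 < d /\
  forall t, Rabs t < d -> Cmod (Cminus (P t) (P 0)) <= (Cmod P' + 1) * Rabs t.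
Proof.
  move=> H; have [d [Hd Hb]] := H 1 Rlt_0_1; exists d; split => // t Ht.
  have -> : Cminus (P t) (P 0) = Cplus (Cminus (Cminus (P t) (P 0)) (Cmult (RtoC t) P')) (Cmult (RtoC t) P') by ring.
  apply: Rle_trans; first apply Cmod_triangle.
  rewrite Cmod_mult Cmod_R. have := Hb t Ht. have := Rabs_pos t. nra.
Qed.

Lemma dlim_ext G H L : (forall t, G t = H t) -> dlim G L -> dlim H L.
Proof. move=> E HG eps He; have [d [Hd Hb]] := HG eps He; exists d; split => // t Ht.
  rewrite -!E; exact: Hb. Qed.

Lemma dlim_eqL G L L' : L = L' -> dlim G L -> dlim G L'.
Proof. by move=> ->. Qed.

Lemma dlim_lin u c : dlim (fun t => Cplus u (Cmult (RtoC t) c)) c.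
Proof.
  move=> eps He; exists 1; split; first lra. move=> t Ht.
  have -> : Cminus (Cminus (Cplus u (Cmult (RtoC t) c)) (Cplus u (Cmult (RtoC 0) c))) (Cmult (RtoC t) c) = RtoC 0.
    apply injective_projections; simpl; ring.
  rewrite Cmod_0. have := Rabs_pos t. nra.
Qed.

Lemma dlim_mul P P' Q Q' : dlim P P' -> dlim Q Q' ->
  dlim (fun t => Cmult (P t) (Q t)) (Cplus (Cmult P' (Q 0)) (Cmult (P 0) Q')).
Proof.
  move=> HP HQ eps He.
  have [dP [HdP HbP]] := dlim_bound _ _ HP.
  have [dQ [HdQ HbQ]] := dlim_bound _ _ HQ.
  set KP := Cmod P' + 1. set KQ := Cmod Q' + 1.
  have HKP : 0 < KP by have := Cmod_ge_0 P'; rewrite /KP; lra.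
  have HKQ : 0 < KQ by have := Cmod_ge_0 Q'; rewrite /KQ; lra.
  set CP := Cmod (P 0). set CQ := Cmod (Q 0).
  have HCP : 0 <= CP by apply Cmod_ge_0.
  have HCQ : 0 <= CQ by apply Cmod_ge_0.
  set e1 := eps / (3 * (CQ + 1)). set e2 := eps / (3 * (CP + 1)).
  have He1 : 0 < e1 by rewrite /e1; apply Rdiv_lt_0_compat; lra.
  have He2 : 0 < e2 by rewrite /e2; apply Rdiv_lt_0_compat; lra.
  have Ee1 : e1 * (CQ + 1) = eps / 3 by rewrite /e1; field; lra.
  have Ee2 : e2 * (CP + 1) = eps / 3 by rewrite /e2; field; lra.
  have [d3 [Hd3 Hb3]] := HP e1 He1.
  have [d4 [Hd4 Hb4]] := HQ e2 He2.
  set d5 := eps / (3 * (KP * KQ)).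
  have Hd5 : 0 < d5 by rewrite /d5; apply Rdiv_lt_0_compat; nra.
  have Ed5 : d5 * (KP * KQ) = eps / 3 by rewrite /d5; field; nra.
  exists (Rmin (Rmin dP dQ) (Rmin (Rmin d3 d4) d5)); split.
    repeat apply Rmin_pos => //.
  move=> t Ht.
  have H1 : Rabs t < dP by move: Ht; repeat (rewrite /Rmin; case: Rle_dec); lra.
  have H2 : Rabs t < dQ by move: Ht; repeat (rewrite /Rmin; case: Rle_dec); lra.
  have H3 : Rabs t < d3 by move: Ht; repeat (rewrite /Rmin; case: Rle_dec); lra.
  have H4 : Rabs t < d4 by move: Ht; repeat (rewrite /Rmin; case: Rle_dec); lra.
  have H5 : Rabs t < d5 by move: Ht; repeat (rewrite /Rmin; case: Rle_dec); lra.
  set X := Cminus (Cminus (P t) (P 0)) (Cmult (RtoC t) P').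
  set Y := Cminus (Cminus (Q t) (Q 0)) (Cmult (RtoC t) Q').
  have -> : Cminus (Cminus (Cmult (P t) (Q t)) (Cmult (P 0) (Q 0)))
      (Cmult (RtoC t) (Cplus (Cmult P' (Q 0)) (Cmult (P 0) Q'))) =
      Cplus (Cplus (Cmult X (Q 0)) (Cmult (P 0) Y))
            (Cmult (Cminus (P t) (P 0)) (Cminus (Q t) (Q 0))) by rewrite /X /Y; ring.
  have T1 := Cmod_triangle (Cplus (Cmult X (Q 0)) (Cmult (P 0) Y))
            (Cmult (Cminus (P t) (P 0)) (Cminus (Q t) (Q 0))).
  have T2 := Cmod_triangle (Cmult X (Q 0)) (Cmult (P 0) Y).
  rewrite !Cmod_mult in T1 T2.
  have B3 := Hb3 t H3. have B4 := Hb4 t H4. have BP := HbP t H1. have BQ := HbQ t H2.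
  fold X in B3. fold Y in B4. fold CP CQ in T2.
  have Ha := Rabs_pos t.
  have Hx := Cmod_ge_0 X. have Hy := Cmod_ge_0 Y.
  have Hpp := Cmod_ge_0 (Cminus (P t) (P 0)). have Hqq := Cmod_ge_0 (Cminus (Q t) (Q 0)).
  have Z1 : Cmod X * CQ <= eps / 3 * Rabs t.
    apply Rle_trans with (e1 * Rabs t * CQ); first by apply Rmult_le_compat_r.
    rewrite -Ee1. nra.
  have Z2 : CP * Cmod Y <= eps / 3 * Rabs t.
    apply Rle_trans with (CP * (e2 * Rabs t)); first by apply Rmult_le_compat_l.
    rewrite -Ee2. nra.
  have Z3 : Cmod (Cminus (P t) (P 0)) * Cmod (Cminus (Q t) (Q 0)) <= eps / 3 * Rabs t.
    apply Rle_trans with ((KP * Rabs t) * (KQ * Rabs t)); first by apply Rmult_le_compat.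
    rewrite -Ed5. have := Rmult_le_pos (d5 - Rabs t) (KP * KQ * Rabs t) ltac:(lra) ltac:(apply Rmult_le_pos; nra). nra.
  lra.
Qed.

Lemma cpow_pred z k : Cmult (RtoC (INR k)) (Cmult z (cpow z k.-1)) = Cmult (RtoC (INR k)) (cpow z k).
Proof. case: k => [|k] /=; last by []. apply injective_projections; simpl; ring. Qed.

Lemma dlim_cpow P P' k : dlim P P' ->
  dlim (fun t => cpow (P t) k) (Cmult (Cmult (RtoC (INR k)) (cpow (P 0) k.-1)) P').
Proof.
  move=> HP; elim: k => [|k IH].
    apply: (dlim_eqL _ (RtoC 0)); first by apply injective_projections; simpl; ring.
    apply: (dlim_ext (fun t => Cplus (RtoC 1) (Cmult (RtoC t) (RtoC 0)))); last apply dlim_lin.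
    move=> t /=; apply injective_projections; simpl; ring.
  have := dlim_mul _ _ _ _ HP IH => H.
  apply: dlim_eqL; last exact H.
  have E := cpow_pred (P 0) k.
  rewrite [INR k.+1]S_INR /=.
  have -> : Cmult (P 0) (Cmult (Cmult (RtoC (INR k)) (cpow (P 0) k.-1)) P') =
            Cmult (Cmult (RtoC (INR k)) (Cmult (P 0) (cpow (P 0) k.-1))) P' by ring.
  rewrite E. apply injective_projections; simpl; ring.
Qed.

HB.instance Definition _ := Monoid.isComLaw.Build C (RtoC 0) Cplus Cplus_assoc Cplus_comm Cplus_0_l.

Lemma sum1 n (F : 'I_n -> C) j : (forall i, i != j -> F i = RtoC 0) -> \big[Cplus/RtoC 0]_(i<n) F i = F j.
Proof. move=> H. rewrite (bigD1 j) //= big1; last by move=> i /H. by rewrite Cplus_0_r. Qed.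

Lemma vnorm_le n (h : Vec n) c : 0 <= c -> (forall i, Cmod (h i) <= c) -> vnorm h <= c.
Proof.
  move=> Hc H; rewrite /vnorm; apply: (big_ind (fun x => x <= c)) => //.
  move=> x y Hx Hy; rewrite /Rmax; case: Rle_dec => //.
Qed.

Definition frechet n (f : Vec n -> C) (z : Vec n) (D : Vec n) :=
  forall eps, 0 < eps -> exists delta, 0 < delta /\
      forall h : Vec n, in_polydisc delta h ->
        Cmod (Cminus (Cminus (f (vadd z h)) (f z))
                     (\big[Cplus/RtoC 0]_(i < n) Cmult (D i) (h i)))
          <= eps * vnorm h.

Lemma chain n (f : Vec n -> C) (z : Vec n) D j (p : R -> C) p' :
  frechet n f z D -> dlim p p' -> p 0 = z j ->
  dlim (fun t => f (fun i => if i == j then p t else z i)) (Cmult (D j) p').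
Proof.
  move=> HF HP Hp0 eps He.
  have [d1 [Hd1 Hb1]] := dlim_bound _ _ HP.
  set M := Cmod p' + 1.
  have HM : 0 < M by have := Cmod_ge_0 p'; rewrite /M; lra.
  have [d2 [Hd2 Hb2]] := HF (eps / (2 * M)) ltac:(apply Rdiv_lt_0_compat; lra).
  set KD := Cmod (D j) + 1.
  have HKD : 0 < KD by have := Cmod_ge_0 (D j); rewrite /KD; lra.
  have [d3 [Hd3 Hb3]] := HP (eps / (2 * KD)) ltac:(apply Rdiv_lt_0_compat; lra).
  exists (Rmin (Rmin d1 (d2 / M)) d3); split.
    repeat apply Rmin_pos => //; apply Rdiv_lt_0_compat => //.
  move=> t Ht.
  have H1 : Rabs t < d1 by move: Ht; repeat (rewrite /Rmin; case: Rle_dec); lra.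
  have H2 : Rabs t < d2 / M by move: Ht; repeat (rewrite /Rmin; case: Rle_dec); lra.
  have H3 : Rabs t < d3 by move: Ht; repeat (rewrite /Rmin; case: Rle_dec); lra.
  set q := Cminus (p t) (p 0).
  have Bq : Cmod q <= M * Rabs t := Hb1 t H1.
  have Hqd : Cmod q < d2.
    apply Rle_lt_trans with (M * Rabs t) => //.
    have : M * Rabs t < M * (d2 / M) by apply Rmult_lt_compat_l.
    have -> : M * (d2 / M) = d2 by field; lra. done.
  set h : Vec n := fun i => if i == j then q else RtoC 0.
  have Ez : (fun i => if i == j then p t else z i) = vadd z h.
    apply functional_extensionality => i; rewrite /vadd /h.
    case: (i == j) / eqP => [->|_]; rewrite /q ?Hp0; apply injective_projections; simpl; ring.
  have Ez0 : (fun i => if i == j then p 0 else z i) = z.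
    apply functional_extensionality => i; case: (i == j) / eqP => [->|_] //.
  have Hh : in_polydisc d2 h.
    move=> i; rewrite /h; case: (i == j) => //; rewrite Cmod_0 //.
  have Hs : \big[Cplus/RtoC 0]_(i < n) Cmult (D i) (h i) = Cmult (D j) q.
    rewrite (sum1 _ _ j) /h ?eqxx //. move=> i /negbTE ->. apply injective_projections; simpl; ring.
  have Hv : vnorm h <= Cmod q.
    apply vnorm_le; first apply Cmod_ge_0.
    move=> i; rewrite /h; case: (i == j); first lra. rewrite Cmod_0; apply Cmod_ge_0.
  have B2 := Hb2 h Hh. rewrite Hs in B2.
  rewrite Ez Ez0.
  have B3 := Hb3 t H3.
  set X := Cminus (Cminus (f (vadd z h)) (f z)) (Cmult (D j) q) in B2.
  set Y := Cminus (Cminus (p t) (p 0)) (Cmult (RtoC t) p') in B3.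
  have -> : Cminus (Cminus (f (vadd z h)) (f z)) (Cmult (RtoC t) (Cmult (D j) p')) =
            Cplus X (Cmult (D j) Y) by rewrite /X /Y /q; ring.
  apply: Rle_trans; first apply Cmod_triangle.
  rewrite Cmod_mult.
  have Ha := Rabs_pos t.
  have Hvq := Cmod_ge_0 q.
  have Hy := Cmod_ge_0 Y.
  have Hdj := Cmod_ge_0 (D j).
  have Z1 : Cmod X <= eps / 2 * Rabs t.
    apply Rle_trans with (eps / (2 * M) * (M * Rabs t)).
      apply Rle_trans with (eps / (2 * M) * vnorm h) => //.
      apply Rmult_le_compat_l; first (apply Rlt_le, Rdiv_lt_0_compat; lra). lra.
    right; field; lra.
  have Z2 : Cmod (D j) * Cmod Y <= eps / 2 * Rabs t.
    apply Rle_trans with (Cmod (D j) * (eps / (2 * KD) * Rabs t)).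
      by apply Rmult_le_compat_l.
    have E : eps / (2 * KD) * KD = eps / 2 by field; lra.
    have : 0 <= eps / (2 * KD) * Rabs t by apply Rmult_le_pos => //; apply Rlt_le, Rdiv_lt_0_compat; lra.
    rewrite -E /KD. nra.
  lra.
Qed.

Definition Aw a b (z : C) := Cmult (Cmult (RtoC (INR a)) (cpow z a.-1)) (cpow (Cconj z) b).
Definition Bw a b (z : C) := Cmult (Cmult (RtoC (INR b)) (cpow z a)) (cpow (Cconj z) b.-1).
Definition phi {n} a b (w : Vec n) : Vec n := fun i => Cmult (cpow (w i) a) (cpow (Cconj (w i)) b).

Lemma dlim_p a b (u c : C) :
  dlim (fun t => Cmult (cpow (Cplus u (Cmult (RtoC t) c)) a)
                       (cpow (Cconj (Cplus u (Cmult (RtoC t) c))) b))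
       (Cplus (Cmult c (Aw a b u)) (Cmult (Cconj c) (Bw a b u))).
Proof.
  have HP := dlim_lin u c.
  have HQ : dlim (fun t => Cconj (Cplus u (Cmult (RtoC t) c))) (Cconj c).
    apply: (dlim_ext (fun t => Cplus (Cconj u) (Cmult (RtoC t) (Cconj c)))); last exact: dlim_lin.
    move=> t; apply injective_projections; simpl; ring.
  have := dlim_mul _ _ _ _ (dlim_cpow _ _ a HP) (dlim_cpow _ _ b HQ) => H.
  apply: dlim_eqL; last exact H.
  have E0 : Cplus u (Cmult (RtoC 0) c) = u by apply injective_projections; simpl; ring.
  rewrite E0 /Aw /Bw. ring.
Qed.

Lemma dlim_g n a b (f : Vec n -> C) (w : Vec n) D j (e : R -> C) c :
  frechet n f (phi a b w) D -> (forall t, e t = Cmult (RtoC t) c) ->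
  dlim (fun t => gab a b f (shift w j (e t)))
       (Cmult (D j) (Cplus (Cmult c (Aw a b (w j))) (Cmult (Cconj c) (Bw a b (w j))))).
Proof.
  move=> HF He.
  have Hp0 : (fun t => Cmult (cpow (Cplus (w j) (Cmult (RtoC t) c)) a)
                       (cpow (Cconj (Cplus (w j) (Cmult (RtoC t) c))) b)) 0 = phi a b w j.
    rewrite /phi /=. have -> : Cplus (w j) (Cmult (RtoC 0) c) = w j by apply injective_projections; simpl; ring.
    done.
  have := chain n f (phi a b w) D j _ _ HF (dlim_p a b (w j) c) Hp0 => H.
  apply: dlim_ext; last exact H.
  move=> t /=. rewrite /gab. f_equal. apply functional_extensionality => i.
  rewrite /shift /phi He. by case: (i == j) / eqP => [->|].
Qed.

Lemma dw_eq n a b (f : Vec n -> C) (w : Vec n) D j :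
  frechet n f (phi a b w) D ->
  dw (gab a b f) w j = Cmult (D j) (Aw a b (w j)) /\
  dwbar (gab a b f) w j = Cmult (D j) (Bw a b (w j)).
Proof.
  move=> HF.
  have [H1 H2] := dlim_Derive _ _ (dlim_g n a b f w D j RtoC (RtoC 1) HF
     ltac:(move=> t; apply injective_projections; simpl; ring)).
  have [H3 H4] := dlim_Derive _ _ (dlim_g n a b f w D j (fun t => Cmult Ci (RtoC t)) Ci HF
     ltac:(move=> t; apply injective_projections; simpl; ring)).
  cbv beta in H1, H2, H3, H4.
  rewrite /dw /dwbar /pdx /pdy H1 H2 H3 H4.
  move: (D j) (Aw a b (w j)) (Bw a b (w j)) => [x1 y1] [x2 y2] [x3 y3].
  split; apply injective_projections; simpl; field.
Qed.

Lemma Aw0 b z : Aw 0 b z = RtoC 0.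
Proof. rewrite /Aw /=. apply injective_projections; simpl; ring. Qed.
Lemma Bw0 a z : Bw a 0 z = RtoC 0.
Proof. rewrite /Bw /=. apply injective_projections; simpl; ring. Qed.

Lemma sq_nonneg x : 0 <= x ^ 2.
Proof. nra. Qed.

Lemma alg_E1 (r : R) wj wk Dj Dk Uj Uk Vj Vk :
  Cminus (Cmult wj (Cconj (Cmult Dk (Cmult (Cmult (RtoC r) Uk) (Cmult (Cconj wk) Vk)))))
         (Cmult wk (Cconj (Cmult Dj (Cmult (Cmult (RtoC r) Uj) (Cmult (Cconj wj) Vj)))))
  = Cmult (RtoC r) (Cconj (Cmult (Cconj (Cmult wj wk)) (Cminus (Cmult (Cmult Dk Uk) Vk) (Cmult (Cmult Dj Uj) Vj)))).
Proof.
  move: wj wk Dj Dk Uj Uk Vj Vk => [? ?] [? ?] [? ?] [? ?] [? ?] [? ?] [? ?] [? ?].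
  apply injective_projections; simpl; ring.
Qed.

Lemma alg_E2 (r : R) wj wk Dj Dk Uj Uk Vj Vk :
  Cminus (Cmult wj (Cmult Dk (Cmult (Cmult (RtoC r) (Cmult wk Uk)) Vk)))
         (Cmult wk (Cmult Dj (Cmult (Cmult (RtoC r) (Cmult wj Uj)) Vj)))
  = Cmult (RtoC r) (Cmult (Cmult wj wk) (Cminus (Cmult (Cmult Dk Uk) Vk) (Cmult (Cmult Dj Uj) Vj))).
Proof.
  move: wj wk Dj Dk Uj Uk Vj Vk => [? ?] [? ?] [? ?] [? ?] [? ?] [? ?] [? ?] [? ?].
  apply injective_projections; simpl; ring.
Qed.

Lemma Cjk_sign n a b (g : Vec n -> C) (w : Vec n) (D : Vec n) j k :
  (forall i, dw g w i = Cmult (D i) (Aw a b (w i)) /\ dwbar g w i = Cmult (D i) (Bw a b (w i))) ->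
  ((b < a)%N -> 0 <= Cjk g w j k) /\ ((a < b)%N -> Cjk g w j k <= 0).
Proof.
  move=> Hd. rewrite /Cjk. have [Ej Fj] := Hd j. have [Ek Fk] := Hd k.
  rewrite Ej Fj Ek Fk.
  destruct a as [|a'].
    rewrite !Aw0. split => // _.
    have -> : Cminus (Cmult (w j) (Cconj (Cmult (D k) (RtoC 0)))) (Cmult (w k) (Cconj (Cmult (D j) (RtoC 0)))) = RtoC 0
      by apply injective_projections; simpl; ring.
    rewrite Cmod_0. have := sq_nonneg (Cmod (Cminus (Cmult (w j) (Cmult (D k) (Bw 0 b (w k))))
          (Cmult (w k) (Cmult (D j) (Bw 0 b (w j)))))). lra.
  destruct b as [|b'].
    rewrite !Bw0. split => // _.
    have -> : Cminus (Cmult (w j) (Cmult (D k) (RtoC 0))) (Cmult (w k) (Cmult (D j) (RtoC 0))) = RtoC 0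
      by apply injective_projections; simpl; ring.
    rewrite Cmod_0. set x := Cmod _. have := sq_nonneg x. lra.
  rewrite /Aw /Bw. have Ha := pos_INR a'.+1. have Hb := pos_INR b'.+1. have Hlt := lt_INR b'.+1 a'.+1. have Hlt' := lt_INR a'.+1 b'.+1. move: Ha Hb Hlt Hlt'. set ra := INR a'.+1. set rb := INR b'.+1. move=> Ha Hb Hlt Hlt'. rewrite /= alg_E1 alg_E2.
  set Z := Cmult (Cmult (w j) (w k)) _.
  have HZ1 : Cmod (Cconj (Cmult (Cconj (Cmult (w j) (w k))) (Cminus (Cmult (Cmult (D k) (cpow (w k) a')) (cpow (Cconj (w k)) b')) (Cmult (Cmult (D j) (cpow (w j) a')) (cpow (Cconj (w j)) b'))))) = Cmod Z by rewrite /Z Cmod_conj !Cmod_mult !Cmod_conj !Cmod_mult. rewrite (Cmod_mult (RtoC ra)) (Cmod_mult (RtoC rb)) HZ1 !Cmod_R.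

  rewrite !Rabs_pos_eq //.
  have HZ := Cmod_ge_0 Z.
  split => H.
    have := Hlt ltac:(apply/ssrnat.ltP; exact H).
    move=> Hl. have := Rmult_le_pos ((ra - rb) * (ra + rb)) (Cmod Z * Cmod Z)
      ltac:(apply Rmult_le_pos; lra) ltac:(apply Rmult_le_pos; lra). lra.
  have := Hlt' ltac:(apply/ssrnat.ltP; exact H).
  move=> Hl. have := Rmult_le_pos ((rb - ra) * (ra + rb)) (Cmod Z * Cmod Z)
      ltac:(apply Rmult_le_pos; lra) ltac:(apply Rmult_le_pos; lra). lra.
Qed.

Lemma Cmod_cpow z k : Cmod (cpow z k) = Cmod z ^ k.
Proof. elim: k => [|k IH] /=; first by rewrite Cmod_R Rabs_R1. by rewrite Cmod_mult IH. Qed.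

Lemma pow_le1 x k : 0 <= x <= 1 -> x ^ k <= 1.
Proof. move=> H; elim: k => [|k IH] /=; first lra. have := pow_le x k ltac:(lra). nra. Qed.

Lemma phi_small n a b (w : Vec n) r : (0 < a + b)%N -> r <= 1 -> in_polydisc r w -> in_polydisc r (phi a b w).
Proof.
  move=> Hab Hr Hw i. rewrite /phi Cmod_mult !Cmod_cpow Cmod_conj -pow_add.
  have Hx := Hw i. have Hx0 := Cmod_ge_0 (w i).
  set x := Cmod (w i) in Hx Hx0 *.
  have : (a + b)%coq_nat = (a + b)%N by []. move=> ->.
  case: (a + b)%N Hab => [//|k] _ /=.
  have := pow_le1 x k ltac:(lra). have := pow_le x k Hx0. nra.
Qed.

Lemma sum_sign n (F : 'I_n -> 'I_n -> R) (P : R -> Prop) :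
  P 0 -> (forall x y, P x -> P y -> P (x + y)) -> (forall j k, P (F j k)) ->
  P (\big[Rplus/0]_(j < n) \big[Rplus/0]_(k < n | (j < k)%N) F j k).
Proof.
  move=> H0 HD HF. apply: big_ind => // j _. apply: big_ind => //.
Qed.

Theorem lemma12 (n a b : nat) (f : Vec n -> C) :
  (exists rho, 0 < rho /\ holomorphic_on rho f)%R ->
  ((b < a)%N ->
     exists r, (0 < r)%R /\ forall w : Vec n, in_polydisc r w ->
       gab a b f w = RtoC 0 -> (0 <= Cg (gab a b f) w)%R) /\
  ((a < b)%N ->
     exists r, (0 < r)%R /\ forall w : Vec n, in_polydisc r w ->
       gab a b f w = RtoC 0 -> (Cg (gab a b f) w <= 0)%R).
Proof.
  move=> [rho [Hrho Hf]].
  have Hr : 0 < Rmin 1 rho by apply Rmin_pos; lra.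
  have key : forall w : Vec n, (0 < a + b)%N -> in_polydisc (Rmin 1 rho) w ->
      exists D, forall i, dw (gab a b f) w i = Cmult (D i) (Aw a b (w i)) /\
                     dwbar (gab a b f) w i = Cmult (D i) (Bw a b (w i)).
    move=> w Hab Hw.
    have Hp : in_polydisc rho (phi a b w).
      move=> i. apply: Rlt_le_trans; first apply (phi_small n a b w _ Hab (Rmin_l 1 rho) Hw).
      apply Rmin_r.
    have [D HD] := Hf _ Hp.
    exists D => i. exact: (dw_eq n a b f w D i HD).
  split => Hab.
    exists (Rmin 1 rho); split => // w Hw _.
    have [D HD] := key w ltac:(rewrite addn_gt0; apply/orP; left; exact: leq_ltn_trans (leq0n b) Hab) Hw.
    rewrite /Cg. apply: (sum_sign n _ (fun x => 0 <= x)); [lra | move=> x y /=; lra |].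
    move=> j k /=. exact: (proj1 (Cjk_sign n a b _ w D j k HD) Hab).
  exists (Rmin 1 rho); split => // w Hw _.
  have [D HD] := key w ltac:(rewrite addn_gt0; apply/orP; right; exact: leq_ltn_trans (leq0n a) Hab) Hw.
  rewrite /Cg. apply: (sum_sign n _ (fun x => x <= 0)); [lra | move=> x y /=; lra |].
  move=> j k /=. exact: (proj2 (Cjk_sign n a b _ w D j k HD) Hab).
Qed.
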